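(* Let $\mathfrak{g}$ be a finite-dimensional real Lie algebra. A star-product $\star$ on $\mathfrak{g}^*$ satisfying property (P1) is entirely determined by the products $(X)^n\star Y$, where $X,Y$ range over $\mathfrak{g}$ and $n$ over $\mathbb{N}$. That is, if $\star$ and $\star'$ are two star-products on $\mathfrak{g}^*$ both satisfying (P1) and $(X)^n\star Y=(X)^n\star' Y$ for all $X,Y\in\mathfrak{g}$ and all $n\in\mathbb{N}$, then $\star=\star'$.
   Context: Elements of $\mathfrak{g}$ are regarded as linear functions on $\mathfrak{g}^*$, and $(X)^n$ denotes the $n$-th pointwise power of $X$, an element of $S^n(\mathfrak{g})$ (polynomial functions on $\mathfrak{g}^*$). With $[X^i,X^j]=c_k^{ij}X^k$ in a basis $X^1,\dots,X^d$, the linear Poisson bracket is $\{a,b\}=c_k^{ij}X^k\partial_ia\,\partial_jb$. A star-product on $\mathfrak{g}^*$ is an $\mathbb{R}[[\epsilon]]$-bilinear associative product $a\star b=\sum_{j\ge0}\epsilon^j\Pi_j(a,b)$ on $C^\infty(\mathfrak{g}^* )[[\epsilon]]$ with bi-differential $\Pi_j$, $\Pi_0(a,b)=ab$ and $\Pi_1(a,b)-\Pi_1(b,a)=\{a,b\}$. Property (P1): for polynomials $p_n,q_m$ of degrees $n,m$, $p_n\star q_m=p_nq_m+r$ with $r$ a polynomial (coefficients in $\mathbb{R}[[\epsilon]]$) of degree at most $m+n-1$. *)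

(* Defs.v *)
From HB Require Import structures.
From mathcomp Require Import all_boot all_order all_algebra.
From mathcomp Require Import all_classical all_reals all_analysis.
Set Implicit Arguments. Unset Strict Implicit. Unset Printing Implicit Defensive.
Import Order.TTheory GRing.Theory Num.Theory.
Import numFieldNormedType.Exports.
Local Open Scope ring_scope.

(* g is a d-dimensional real Lie algebra with basis X^1..X^d and structure
   constants c i j k : [X^i, X^j] = sum_k c i j k X^k.
   g^* is identified with 'rV[R]_d via the dual basis: xi 0 k = xi(X^k). *)

Section Defs.
Variables (R : realType) (d : nat).
Local Notation V := 'rV[R]_d.

Definition is_lie_structure (c : 'I_d -> 'I_d -> 'I_d -> R) : Prop :=
  (forall i j k, c i j k = - c j i k) /\
  (forall i j l m, \sum_(k < d) (c i j k * c k l m + c j l k * c k i m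
                                 + c l i k * c k j m) = 0).

Definition dpart1 (i : 'I_d) (f : V -> R) : V -> R :=
  fun x => derive f x (delta_mx 0 i).

Definition dpart (s : seq 'I_d) (f : V -> R) : V -> R := foldr dpart1 f s.

Definition smooth (f : V -> R) : Prop :=
  forall (s : seq 'I_d) (x : V), differentiable (dpart s f) x.

(* formal power series in epsilon with smooth coefficients *)
Definition epsseries := nat -> V -> R.
Definition smooth_series (a : epsseries) : Prop := forall n, smooth (a n).
Definition cst_series (f : V -> R) : epsseries :=
  fun n => if n == 0%N then f else (fun _ => 0).

Definition bidifferential (Pi : (V -> R) -> (V -> R) -> (V -> R)) : Prop :=
  exists terms : seq (seq 'I_d * seq 'I_d * (V -> R)),
    (forall t, t \in terms -> smooth t.2) /\
    forall a b, smooth a -> smooth b ->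
      Pi a b = fun x => \sum_(t <- terms) t.2 x * dpart t.1.1 a x * dpart t.1.2 b x.

(* the R[[eps]]-bilinear product a * b = sum_j eps^j Pi_j(a,b) *)
Definition star (Pi : nat -> (V -> R) -> (V -> R) -> (V -> R)) (a b : epsseries)
  : epsseries :=
  fun n x => \sum_(j < n.+1) \sum_(i < (n - j).+1) Pi j (a i) (b (n - j - i)%N) x.

Definition poisson (c : 'I_d -> 'I_d -> 'I_d -> R) (a b : V -> R) : V -> R :=
  fun x => \sum_(i < d) \sum_(j < d) \sum_(k < d)
             c i j k * x 0 k * dpart1 i a x * dpart1 j b x.

Definition is_star_product (c : 'I_d -> 'I_d -> 'I_d -> R)
    (Pi : nat -> (V -> R) -> (V -> R) -> (V -> R)) : Prop :=
  [/\ forall j, bidifferential (Pi j),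
      forall a b, smooth a -> smooth b -> Pi 0%N a b = (fun x => a x * b x),
      forall a b, smooth a -> smooth b ->
        forall x, Pi 1%N a b x - Pi 1%N b a x = poisson c a b x
    & forall a b e, smooth_series a -> smooth_series b -> smooth_series e ->
        star Pi (star Pi a b) e = star Pi a (star Pi b e)].

Definition poly_deg_lt (f : V -> R) (K : nat) : Prop :=
  exists mons : seq (R * seq 'I_d),
    (forall m, m \in mons -> (size m.2 < K)%N) /\
    f = fun x => \sum_(m <- mons) m.1 * \prod_(i <- m.2) x 0 i.

(* Property (P1): for p, q polynomials of degree <= n, <= m,
   p * q = pq + r with r of degree <= n + m - 1 (coefficientwise in eps;
   the eps^0 coefficient is pq by Pi_0 = product). *)
Definition P1 (Pi : nat -> (V -> R) -> (V -> R) -> (V -> R)) : Prop :=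
  forall (n m : nat) (p q : V -> R),
    poly_deg_lt p n.+1 -> poly_deg_lt q m.+1 ->
    forall j, (0 < j)%N -> poly_deg_lt (Pi j p q) (n + m).

(* an element X of g as a linear function on g^*, and its n-th power *)
Definition linf (X : V) : V -> R := fun xi => \sum_(k < d) X 0 k * xi 0 k.
Definition powf (X : V) (n : nat) : V -> R := fun xi => linf X xi ^+ n.

End Defs.

(* Main.v *)
Require Import Defs.
From HB Require Import structures.
From mathcomp Require Import all_boot all_order all_algebra.
From mathcomp Require Import all_classical all_reals all_analysis.
From mathcomp Require Import ring lra zify.
Set Implicit Arguments. Unset Strict Implicit. Unset Printing Implicit Defensive.
Import Order.TTheory GRing.Theory Num.Theory.
Import numFieldNormedType.Exports.
Local Open Scope ring_scope.

Section Calc.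
Variables (R : realType) (d : nat).
Local Notation V := 'rV[R]_d.
Implicit Types f g : V -> R.

Definition fadd f g : V -> R := fun x => f x + g x.
Definition fscal (k : R) f : V -> R := fun x => k * f x.
Definition fmul f g : V -> R := fun x => f x * g x.
Definition fcst (c : R) : V -> R := fun _ => c.
Definition coord (i : 'I_d) : V -> R := fun x => x 0 i.

Definition diffall f := forall x, differentiable f x.

Lemma dpart1_add i f g : diffall f -> diffall g ->
  dpart1 i (fadd f g) = fadd (dpart1 i f) (dpart1 i g).
Proof.
move=> df dg; apply/funext => x; rewrite /dpart1 /fadd.
have -> : (fun x => f x + g x) = f + g by [].
by rewrite deriveD //; apply: diff_derivable.
Qed.

Lemma dpart1_scal i k f : diffall f ->
  dpart1 i (fscal k f) = fscal k (dpart1 i f).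
Proof.
move=> df; apply/funext => x; rewrite /dpart1 /fscal.
have -> : (fun x => k * f x) = k \*: f by [].
by rewrite deriveZ //; apply: diff_derivable.
Qed.

Lemma dpart1_mul i f g : diffall f -> diffall g ->
  dpart1 i (fmul f g) = fadd (fmul (dpart1 i f) g) (fmul f (dpart1 i g)).
Proof.
move=> df dg; apply/funext => x; rewrite /dpart1 /fadd /fmul.
have -> : (fun x => f x * g x) = f * g by [].
rewrite deriveM; try by apply: diff_derivable.
by rewrite addrC /GRing.scale /= mulrC [f x * _]mulrC.
Qed.

Lemma dpart1_cst i c : dpart1 i (fcst c) = fcst 0.
Proof.
apply/funext => x; rewrite /dpart1 /fcst.
have -> : (fun _ : V => c) = cst c by [].
by rewrite derive_cst.
Qed.

Lemma coord_lin i : linear (coord i).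
Proof. by move=> a u v; rewrite /coord !mxE. Qed.

Lemma dpart1_coord i j : dpart1 i (coord j) = fcst (if j == i then 1 else 0).
Proof.
apply/funext => x; rewrite /dpart1 /fcst.
pose cM := GRing.isLinear.Build _ _ _ _ _ (coord_lin j).
pose cL : {linear V -> R} := HB.pack (coord j) cM.
have cc : continuous cL by apply: coord_continuous.
have -> : coord j = cL by [].
rewrite deriveE; last by apply: linear_differentiable.
rewrite diff_lin //= /coord mxE.
by rewrite eqxx; case: (j == i).
Qed.

Lemma diffall_add f g : diffall f -> diffall g -> diffall (fadd f g).
Proof. by move=> df dg x; apply: differentiableD. Qed.
Lemma diffall_scal k f : diffall f -> diffall (fscal k f).
Proof.
move=> df x; have -> : fscal k f = k *: f by [].
by apply: differentiableZ.
Qed.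
Lemma diffall_mul f g : diffall f -> diffall g -> diffall (fmul f g).
Proof. by move=> df dg x; apply: differentiableM. Qed.
Lemma diffall_cst c : diffall (fcst c).
Proof. by move=> x; apply: differentiable_cst. Qed.
Lemma diffall_coord i : diffall (coord i).
Proof. by move=> x; apply: differentiable_coord. Qed.

End Calc.

Section Poly.
Variables (R : realType) (d : nat).
Local Notation V := 'rV[R]_d.
Implicit Types f g : V -> R.
Local Notation fadd := (@fadd R d).
Local Notation fscal := (@fscal R d).
Local Notation fmul := (@fmul R d).
Local Notation fcst := (@fcst R d).
Local Notation coord := (@coord R d).
Local Notation diffall := (@diffall R d).

Lemma dpart_cat s1 s2 f : dpart (s1 ++ s2) f = dpart s1 (dpart s2 f).
Proof. by rewrite /dpart foldr_cat. Qed.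

Lemma dpart_cons i s f : dpart (i :: s) f = dpart1 i (dpart s f).
Proof. by []. Qed.

Lemma smooth_diffall f : smooth f -> diffall f.
Proof. by move=> sf x; apply: (sf [::]). Qed.

Lemma smooth_dpart s f : smooth f -> smooth (dpart s f).
Proof. by move=> sf s' x; rewrite -dpart_cat; apply: sf. Qed.

Lemma smooth_dpart1 i f : smooth f -> smooth (dpart1 i f).
Proof. by move=> sf; apply: (smooth_dpart [:: i]). Qed.

Lemma dpart_add s f g : smooth f -> smooth g ->
  dpart s (fadd f g) = fadd (dpart s f) (dpart s g).
Proof.
move=> sf sg; elim: s => [//|i s IH].
rewrite !dpart_cons IH dpart1_add //; apply: smooth_diffall; exact: smooth_dpart.
Qed.

Lemma dpart_scal s k f : smooth f -> dpart s (fscal k f) = fscal k (dpart s f).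
Proof.
move=> sf; elim: s => [//|i s IH].
rewrite !dpart_cons IH dpart1_scal //; apply: smooth_diffall; exact: smooth_dpart.
Qed.

Lemma dpart_zero s : dpart s (fcst 0) = fcst 0.
Proof. by elim: s => [//|i s IH]; rewrite dpart_cons IH dpart1_cst. Qed.

Lemma smooth_add f g : smooth f -> smooth g -> smooth (fadd f g).
Proof.
move=> sf sg s x; rewrite dpart_add //; apply: diffall_add;
  apply: smooth_diffall; exact: smooth_dpart.
Qed.

Lemma smooth_scal k f : smooth f -> smooth (fscal k f).
Proof.
move=> sf s x; rewrite dpart_scal //; apply: diffall_scal;
  apply: smooth_diffall; exact: smooth_dpart.
Qed.

Lemma smooth_zero : smooth (fcst 0).
Proof. by move=> s x; rewrite dpart_zero; apply: diffall_cst. Qed.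

Definition mon (s : seq 'I_d) : V -> R := fun x => \prod_(i <- s) x 0 i.
Definition polyfun (mons : seq (R * seq 'I_d)) : V -> R :=
  fun x => \sum_(m <- mons) m.1 * \prod_(i <- m.2) x 0 i.
Definition ispoly f := exists K, poly_deg_lt f K.

Lemma polyfun_cons m mons :
  polyfun (m :: mons) = fadd (fscal m.1 (mon m.2)) (polyfun mons).
Proof. by apply/funext => x; rewrite /polyfun big_cons. Qed.

Lemma polyfun_nil : polyfun [::] = fcst 0.
Proof. by apply/funext => x; rewrite /polyfun big_nil. Qed.

Lemma mon_cons i s : mon (i :: s) = fmul (coord i) (mon s).
Proof. by apply/funext => x; rewrite /mon big_cons. Qed.

Lemma mon_nil : mon [::] = fcst 1.
Proof. by apply/funext => x; rewrite /mon big_nil. Qed.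

Lemma pdl_mono f K K' : (K <= K')%N -> poly_deg_lt f K -> poly_deg_lt f K'.
Proof.
move=> le [mons [H ->]]; exists mons; split => // m /H h.
exact: leq_trans h le.
Qed.

Lemma pdl0 f : poly_deg_lt f 0 -> f = fcst 0.
Proof.
move=> [[|m mons] [H ->]]; first exact: polyfun_nil.
by have := H m; rewrite inE eqxx => /(_ isT).
Qed.

Lemma pdl_add f g K : poly_deg_lt f K -> poly_deg_lt g K -> poly_deg_lt (fadd f g) K.
Proof.
move=> [m1 [H1 ->]] [m2 [H2 ->]]; exists (m1 ++ m2); split.
  by move=> m; rewrite mem_cat => /orP [/H1|/H2].
by apply/funext => x; rewrite /fadd big_cat.
Qed.

Lemma pdl_scal k f K : poly_deg_lt f K -> poly_deg_lt (fscal k f) K.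
Proof.
move=> [m1 [H1 ->]]; exists [seq (k * m.1, m.2) | m <- m1]; split.
  by move=> m /mapP [m' /H1 h ->].
apply/funext => x; rewrite /fscal big_map big_distrr /=.
by apply: eq_bigr => m _; rewrite mulrA.
Qed.

Lemma pdl_mul f g K1 K2 : poly_deg_lt f K1 -> poly_deg_lt g K2 ->
  poly_deg_lt (fmul f g) (K1 + K2).
Proof.
move=> [m1 [H1 ->]] [m2 [H2 ->]].
exists [seq (a.1 * b.1, a.2 ++ b.2) | a <- m1, b <- m2]; split.
  move=> m /allpairsP [[a b] /= [/H1 ha /H2 hb ->]] /=.
  by rewrite size_cat -addSn; apply: leq_add => //; apply: ltnW.
apply/funext => x; rewrite /fmul big_allpairs_dep /= big_distrl /=.
apply: eq_bigr => a _; rewrite big_distrr /=; apply: eq_bigr => b _.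
by rewrite big_cat /= mulrACA.
Qed.

Lemma pdl_mon s : poly_deg_lt (mon s) (size s).+1.
Proof.
exists [:: (1, s)]; split; first by move=> m; rewrite inE => /eqP ->.
by apply/funext => x; rewrite big_seq1 mul1r.
Qed.

Lemma pdl_cst c : poly_deg_lt (fcst c) 1.
Proof.
exists [:: (c, [::])]; split; first by move=> m; rewrite inE => /eqP ->.
by apply/funext => x; rewrite big_seq1 big_nil mulr1.
Qed.

Lemma pdl_coord i : poly_deg_lt (coord i) 2.
Proof.
exists [:: (1, [:: i])]; split; first by move=> m; rewrite inE => /eqP ->.
by apply/funext => x; rewrite big_seq1 big_seq1 mul1r.
Qed.

Lemma ispoly_add f g : ispoly f -> ispoly g -> ispoly (fadd f g).
Proof.
move=> [K1 h1] [K2 h2]; exists (maxn K1 K2); apply: pdl_add.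
  by apply: pdl_mono h1; apply: leq_maxl.
by apply: pdl_mono h2; apply: leq_maxr.
Qed.
Lemma ispoly_scal k f : ispoly f -> ispoly (fscal k f).
Proof. by move=> [K h]; exists K; apply: pdl_scal. Qed.
Lemma ispoly_mul f g : ispoly f -> ispoly g -> ispoly (fmul f g).
Proof. by move=> [K1 h1] [K2 h2]; exists (K1 + K2)%N; apply: pdl_mul. Qed.
Lemma ispoly_cst c : ispoly (fcst c).
Proof. by exists 1%N; apply: pdl_cst. Qed.
Lemma ispoly_coord i : ispoly (coord i).
Proof. by exists 2%N; apply: pdl_coord. Qed.
Lemma ispoly_mon s : ispoly (mon s).
Proof. by exists (size s).+1; apply: pdl_mon. Qed.

Definition good f := diffall f /\ forall i, ispoly (dpart1 i f).

Lemma good_mon s : good (mon s).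
Proof.
elim: s => [|j s [d1 d2]].
  rewrite mon_nil; split; first exact: diffall_cst.
  by move=> i; rewrite dpart1_cst; apply: ispoly_cst.
rewrite mon_cons; split; first by apply: diffall_mul => //; apply: diffall_coord.
move=> i; rewrite dpart1_mul //; last exact: diffall_coord.
apply: ispoly_add; apply: ispoly_mul; rewrite ?dpart1_coord;
  by [apply: ispoly_cst | apply: ispoly_mon | apply: ispoly_coord | apply: d2].
Qed.

Lemma good_poly f : ispoly f -> good f.
Proof.
move=> [K [mons [_ ->]]]; rewrite -/(polyfun mons).
elim: mons => [|m mons [d1 d2]].
  rewrite polyfun_nil; split; first exact: diffall_cst.
  by move=> i; rewrite dpart1_cst; apply: ispoly_cst.
have [m1 m2] := good_mon m.2.
rewrite polyfun_cons; split.
  by apply: diffall_add => //; apply: diffall_scal.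
move=> i; rewrite dpart1_add //; last exact: diffall_scal.
rewrite dpart1_scal //; apply: ispoly_add => //; exact: ispoly_scal.
Qed.

Lemma ispoly_dpart s f : ispoly f -> ispoly (dpart s f).
Proof.
move=> pf; elim: s => [//|i s IH]; rewrite dpart_cons.
by have [_] := good_poly IH; apply.
Qed.

Lemma smooth_poly f : ispoly f -> smooth f.
Proof.
by move=> pf s x; have [h _] := good_poly (ispoly_dpart s pf); apply: h.
Qed.

Lemma ispoly_polyfun mons : ispoly (polyfun mons).
Proof.
elim: mons => [|m mons IH]; first by rewrite polyfun_nil; apply: ispoly_cst.
rewrite polyfun_cons; apply: ispoly_add => //; apply: ispoly_scal; apply: ispoly_mon.
Qed.

Lemma linf_coord i : linf (delta_mx 0 i) = coord i.
Proof.
apply/funext => x; rewrite /linf /coord (bigD1 i) //= big1 ?addr0.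
  by rewrite mxE !eqxx mul1r.
by move=> k /negbTE ne; rewrite mxE ne andbF mul0r.
Qed.

Lemma linf_polyfun (X : V) :
  linf X = polyfun [seq (X 0 k, [:: k]) | k <- index_enum 'I_d].
Proof.
by apply/funext => x; rewrite /linf /polyfun big_map; apply: eq_bigr => k _;
  rewrite big_seq1.
Qed.

Lemma ispoly_linf (X : V) : ispoly (linf X).
Proof. rewrite linf_polyfun; exact: ispoly_polyfun. Qed.

Lemma powfS (X : V) n : powf X n.+1 = fmul (linf X) (powf X n).
Proof. by apply/funext => x; rewrite /powf /fmul exprS. Qed.

Lemma ispoly_powf (X : V) n : ispoly (powf X n).
Proof.
elim: n => [|n IH].
  have -> : powf X 0 = fcst 1 by apply/funext => x; rewrite /powf expr0.
  exact: ispoly_cst.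
rewrite powfS; apply: ispoly_mul => //; exact: ispoly_linf.
Qed.

End Poly.

Section Bid.
Variables (R : realType) (d : nat).
Local Notation V := 'rV[R]_d.
Implicit Types f g a b : V -> R.
Local Notation fadd := (@fadd R d).
Local Notation fscal := (@fscal R d).
Local Notation fmul := (@fmul R d).
Local Notation fcst := (@fcst R d).

Variable Pi : nat -> (V -> R) -> (V -> R) -> (V -> R).
Hypothesis Hbid : forall j, bidifferential (Pi j).

Lemma Pi_zero_l j f : smooth f -> Pi j (fcst 0) f = fcst 0.
Proof.
move=> sf; have [T [_ HT]] := Hbid j; rewrite HT //; last exact: smooth_zero.
apply/funext => x; rewrite big1 // => t _; rewrite dpart_zero /fcst.
by rewrite mulr0 mul0r.
Qed.

Lemma Pi_zero_r j f : smooth f -> Pi j f (fcst 0) = fcst 0.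
Proof.
move=> sf; have [T [_ HT]] := Hbid j; rewrite HT //; last exact: smooth_zero.
apply/funext => x; rewrite big1 // => t _; rewrite dpart_zero /fcst.
by rewrite mulr0.
Qed.

Lemma Pi_add_l j a1 a2 b : smooth a1 -> smooth a2 -> smooth b ->
  Pi j (fadd a1 a2) b = fadd (Pi j a1 b) (Pi j a2 b).
Proof.
move=> s1 s2 sb; have [T [_ HT]] := Hbid j.
rewrite !HT //; last exact: smooth_add.
apply/funext => x; rewrite /fadd -big_split /=; apply: eq_bigr => t _.
by rewrite dpart_add // /fadd mulrDr mulrDl.
Qed.

Lemma Pi_add_r j a b1 b2 : smooth a -> smooth b1 -> smooth b2 ->
  Pi j a (fadd b1 b2) = fadd (Pi j a b1) (Pi j a b2).
Proof.
move=> sa s1 s2; have [T [_ HT]] := Hbid j.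
rewrite !HT //; last exact: smooth_add.
apply/funext => x; rewrite /fadd -big_split /=; apply: eq_bigr => t _.
by rewrite dpart_add // /fadd mulrDr.
Qed.

Lemma Pi_scal_l j k a b : smooth a -> smooth b ->
  Pi j (fscal k a) b = fscal k (Pi j a b).
Proof.
move=> sa sb; have [T [_ HT]] := Hbid j.
rewrite !HT //; last exact: smooth_scal.
apply/funext => x; rewrite /fscal big_distrr /=; apply: eq_bigr => t _.
by rewrite dpart_scal // /fscal mulrCA !mulrA.
Qed.

Lemma Pi_scal_r j k a b : smooth a -> smooth b ->
  Pi j a (fscal k b) = fscal k (Pi j a b).
Proof.
move=> sa sb; have [T [_ HT]] := Hbid j.
rewrite !HT //; last exact: smooth_scal.
apply/funext => x; rewrite /fscal big_distrr /=; apply: eq_bigr => t _.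
by rewrite dpart_scal // /fscal mulrCA.
Qed.

Lemma smooth_cst_series f : smooth f -> smooth_series (cst_series f).
Proof. by move=> sf [|n] //=; apply: smooth_zero. Qed.

Lemma star_cstl a (B : epsseries R d) n x :
  (forall i, smooth (B i)) ->
  star Pi (cst_series a) B n x = \sum_(j < n.+1) Pi j a (B (n - j)%N) x.
Proof.
move=> sB; rewrite /star; apply: eq_bigr => j _.
rewrite big_ord_recl /= subn0 big1 ?addr0 // => i _.
by have := Pi_zero_l j (sB (n - j - bump 0 i)%N) => /= ->.
Qed.

Lemma star_cstr (A : epsseries R d) b n x :
  (forall i, smooth (A i)) ->
  star Pi A (cst_series b) n x = \sum_(j < n.+1) Pi j (A (n - j)%N) b x.
Proof.
move=> sA; rewrite /star; apply: eq_bigr => j _.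
rewrite big_ord_recr /= subnn big1 ?add0r // => i _.
rewrite /cst_series; case: eqP => [e|_].
  by move: (ltn_ord i); rewrite -subn_gt0 e.
by have := Pi_zero_r j (sA i) => /= ->.
Qed.

Lemma star_cc a b : smooth a -> smooth b ->
  star Pi (cst_series a) (cst_series b) = fun n => Pi n a b.
Proof.
move=> sa sb; apply/funext => n; apply/funext => x.
rewrite star_cstl; last exact: smooth_cst_series.
rewrite big_ord_recr /= subnn big1 ?add0r // => j _.
rewrite /cst_series; case: eqP => [e|_].
  by move: (ltn_ord j); rewrite -subn_gt0 e.
by have := Pi_zero_r j sa => /= ->.
Qed.

Lemma coef_assoc a b e :
  (forall A B E : epsseries R d, smooth_series A -> smooth_series B -> smooth_series E ->
        star Pi (star Pi A B) E = star Pi A (star Pi B E)) ->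
  smooth a -> smooth b -> smooth e ->
  (forall l, smooth (Pi l a b)) -> (forall l, smooth (Pi l b e)) ->
  forall n x, \sum_(k < n.+1) Pi k (Pi (n - k)%N a b) e x
            = \sum_(k < n.+1) Pi k a (Pi (n - k)%N b e) x.
Proof.
move=> Has sa sb se sab sbe n x.
have := Has _ _ _ (smooth_cst_series sa) (smooth_cst_series sb)
  (smooth_cst_series se).
rewrite (star_cc sa sb) (star_cc sb se) => /(congr1 (fun F => F n x)).
by rewrite star_cstr // star_cstl.
Qed.

End Bid.

Section Polar.
Variables (R : realType) (d : nat).
Local Notation V := 'rV[R]_d.
Local Notation fadd := (@fadd R d).
Local Notation fscal := (@fscal R d).
Local Notation fcst := (@fcst R d).

Variable Q : (V -> R) -> Prop.
Hypothesis Qadd : forall f g, Q f -> Q g -> Q (fadd f g).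
Hypothesis Qscal : forall k f, Q f -> Q (fscal k f).
Hypothesis Qpow : forall X n, Q (powf X n).

Lemma Q0 : Q (fcst 0).
Proof.
have -> : fcst 0 = fscal 0 (powf 0 0) by apply/funext => x; rewrite /fscal mul0r.
exact: Qscal.
Qed.

Lemma Qsum n (F : 'I_n -> V -> R) : (forall l, Q (F l)) ->
  Q (fun x => \sum_(l < n) F l x).
Proof.
elim: n F => [|n IH] F H.
  have -> : (fun x : V => \sum_(l < 0) F l x) = fcst 0.
    by apply/funext => x; rewrite big_ord0.
  exact: Q0.
have -> : (fun x => \sum_(l < n.+1) F l x) =
   fadd (fun x => \sum_(l < n) F (widen_ord (leqnSn n) l) x) (F ord_max).
  by apply/funext => x; rewrite big_ord_recr.
by apply: Qadd; [apply: IH => l; apply: H | apply: H].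
Qed.

Lemma Qvander b (v : nat -> V -> R) :
  (forall t : R, Q (fun x => \sum_(i < b.+1) t ^+ i * v i x)) ->
  forall i, (i < b.+1)%N -> Q (v i).
Proof.
move=> Hw i ib.
pose a : 'rV[R]_b.+1 := \row_(j < b.+1) (j%:R : R).
pose A := Vandermonde b.+1 a.
have uA : A \in unitmx.
  rewrite unitmxE unitfE det_Vandermonde; apply/prodf_neq0 => k _.
  apply/prodf_neq0 => l kl; rewrite /a !mxE subr_eq0 eqr_nat.
  by rewrite eq_sym neq_ltn kl.
pose W := invmx A.
have -> : v i = fun x => \sum_(l < b.+1)
   W l (Ordinal ib) * (\sum_(i' < b.+1) (l%:R : R) ^+ i' * v i' x).
  apply/funext => x.
  transitivity (\sum_(i' < b.+1) (A *m W) i' (Ordinal ib) * v i' x).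
    rewrite mulmxV // (bigD1 (Ordinal ib)) //= big1 ?addr0.
      by rewrite mxE eqxx mul1r.
    by move=> k /negbTE ne; rewrite mxE ne mul0r.
  rewrite (eq_bigr (fun i' => \sum_(l < b.+1) A i' l * W l (Ordinal ib) * v i' x));
    last by move=> k _; rewrite mxE big_distrl.
  rewrite exchange_big /=; apply: eq_bigr => l _; rewrite big_distrr /=.
  by apply: eq_bigr => k _; rewrite /A /a !mxE mulrCA mulrA.
apply: Qsum => l.
have -> : (fun x => W l (Ordinal ib) *
     (\sum_(i' < b.+1) (l%:R : R) ^+ i' * v i' x)) = fscal (W l (Ordinal ib))
     (fun x => \sum_(i' < b.+1) (l%:R : R) ^+ i' * v i' x) by [].
exact: Qscal.
Qed.

Lemma linfD (Z X : V) t : linf (Z + t *: X) = fun x => linf Z x + t * linf X x.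
Proof.
apply/funext => x; rewrite /linf big_distrr -big_split /=; apply: eq_bigr => k _.
by rewrite !mxE mulrDl mulrA.
Qed.

Lemma Qprod (L : seq V) : forall (Z : V) k,
  Q (fun x => (\prod_(X <- L) linf X x) * linf Z x ^+ k).
Proof.
elim: L => [|X L IH] Z k.
  have -> : (fun x => (\prod_(X <- [::]) linf X x) * linf Z x ^+ k) = powf Z k.
    by apply/funext => x; rewrite big_nil mul1r.
  exact: Qpow.
pose v := fun i x => (\prod_(X <- L) linf X x) *
   (linf Z x ^+ (k.+1 - i) * linf X x ^+ i *+ 'C(k.+1, i)).
have H : forall t : R, Q (fun x => \sum_(i < k.+2) t ^+ i * v i x).
  move=> t; have HQ := IH (Z + t *: X) k.+1.
  have E : (fun x => (\prod_(X <- L) linf X x) * linf (Z + t *: X) x ^+ k.+1)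
     = (fun x => \sum_(i < k.+2) t ^+ i * v i x).
    apply/funext => x; rewrite /v linfD exprDn mulr_sumr; apply: eq_bigr => i _.
    by rewrite exprMn !mulrnAr; congr (_ *+ _); ring.
  rewrite -E; exact: HQ.
have := Qvander H (isT : (1 < k.+2)%N) => /(Qscal (k.+1%:R)^-1).
have -> // : fscal (k.+1%:R)^-1 (v 1%N) =
   (fun x => (\prod_(X0 <- X :: L) linf X0 x) * linf Z x ^+ k).
apply/funext => x; rewrite /fscal /v big_cons bin1 subSS subn0 expr1 mulrnAr -mulr_natr.
have nz : (k.+1%:R : R) != 0 by rewrite pnatr_eq0.
by field.
Qed.

Lemma Qmon s : Q (mon s).
Proof.
have := Qprod [seq delta_mx 0 i | i <- s] 0 0.
have -> // : (fun x => (\prod_(X <- [seq delta_mx 0 i | i <- s]) linf X x) *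
   linf (0 : V) x ^+ 0) = mon s.
apply/funext => x; rewrite expr0 mulr1 big_map /mon; apply: eq_bigr => i _.
by rewrite linf_coord.
Qed.


End Polar.

Section Single.
Variables (R : realType) (d : nat).
Local Notation V := 'rV[R]_d.
Implicit Types f g a b p q : V -> R.
Local Notation fadd := (@fadd R d).
Local Notation fscal := (@fscal R d).
Local Notation fmul := (@fmul R d).
Local Notation fcst := (@fcst R d).
Local Notation coord := (@coord R d).
Local Notation mon := (@mon R d).

Variable Pi : nat -> (V -> R) -> (V -> R) -> (V -> R).
Hypothesis Hbid : forall j, bidifferential (Pi j).
Hypothesis H0 : forall a b, smooth a -> smooth b -> Pi 0%N a b = (fun x => a x * b x).
Hypothesis Has : forall A B E : epsseries R d,
  smooth_series A -> smooth_series B -> smooth_series E ->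
  star Pi (star Pi A B) E = star Pi A (star Pi B E).
Hypothesis HP1 : P1 Pi.

Lemma Pi_poly j a b : ispoly a -> ispoly b -> ispoly (Pi j a b).
Proof.
move=> [n pa] [m pb].
have sa : smooth a.
  by apply: smooth_poly; exists n.
have sb : smooth b.
  by apply: smooth_poly; exists m.
case: j => [|j].
  by rewrite H0 //; apply: ispoly_mul; [exists n | exists m].
move: pa pb; case: n => [/pdl0 E _|n pa].
  by rewrite E (Pi_zero_l Hbid) //; apply: ispoly_cst.
case: m => [/pdl0 E|m pb].
  by rewrite E (Pi_zero_r Hbid) //; apply: ispoly_cst.
by exists (n + m)%N; apply: HP1.
Qed.

Lemma Pi_smooth j a b : ispoly a -> ispoly b -> smooth (Pi j a b).
Proof. by move=> pa pb; apply: smooth_poly; apply: Pi_poly. Qed.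

Lemma coef_assoc_poly a b e : ispoly a -> ispoly b -> ispoly e ->
  forall n x, \sum_(k < n.+1) Pi k (Pi (n - k)%N a b) e x
            = \sum_(k < n.+1) Pi k a (Pi (n - k)%N b e) x.
Proof.
move=> pa pb pe; apply: coef_assoc => //; try exact: smooth_poly.
  by move=> l; apply: Pi_smooth.
by move=> l; apply: Pi_smooth.
Qed.

Lemma Pi_one j p : ispoly p -> Pi j p (fcst 1) = if j == 0%N then p else fcst 0.
Proof.
move=> pp; have s1 : smooth (fcst 1) by apply: smooth_poly; apply: ispoly_cst.
have p1 : ispoly (fcst 1) by apply: ispoly_cst.
have Ep1 : Pi 0 p (fcst 1) = p.
  rewrite H0; [|exact: smooth_poly pp|exact: s1].
  by apply/funext => x; rewrite /fcst mulr1.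
case: j => [//|j] /=.
elim/ltn_ind: j => j IH.
have P11 l : (0 < l)%N -> Pi l (fcst 1) (fcst 1) = fcst 0.
  case: l => // l _; apply: pdl0; apply: (HP1 (n := 0) (m := 0)) => //; exact: pdl_cst.
have E11 : Pi 0 (fcst 1) (fcst 1) = fcst 1.
  by rewrite H0 //; apply/funext => x; rewrite /fcst mulr1.
apply/funext => x.
have := coef_assoc_poly pp p1 p1 j.+1 x.
have -> : \sum_(k < j.+2) Pi k p (Pi (j.+1 - k) (fcst 1) (fcst 1)) x = Pi j.+1 p (fcst 1) x.
  rewrite big_ord_recr /= subnn E11 big1 ?add0r // => k _.
  rewrite P11 ?subn_gt0 // (Pi_zero_r Hbid) //; exact: smooth_poly.
rewrite big_ord_recl big_ord_recr /= subn0 subnn Ep1 big1 ?add0r; last first.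
  move=> i _; rewrite /bump /= add1n subSS -(subnSK (ltn_ord i)) IH.
    by rewrite (Pi_zero_l Hbid).
  by have := ltn_ord i; lia.
rewrite H0; [|exact: Pi_smooth|exact: s1].
rewrite /bump /= add1n /fcst mulr1 => /eqP; rewrite -subr_eq0 addrK => /eqP.
by [].
Qed.

Lemma step_formula j p s i x : ispoly p ->
  Pi j p (mon (i :: s)) x =
    \sum_(k < j.+1) Pi k (Pi (j - k) p (mon s)) (coord i) x
  - \sum_(k < j) Pi k p (Pi (j - k) (mon s) (coord i)) x.
Proof.
move=> pp; have E := coef_assoc_poly pp (@ispoly_mon R d s) (@ispoly_coord R d i) j x.
rewrite [X in _ = X]big_ord_recr /= subnn in E.
have -> : mon (i :: s) = Pi 0 (mon s) (coord i).
  rewrite H0; try apply: smooth_poly; try apply: ispoly_mon; try apply: ispoly_coord.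
  by apply/funext => y; rewrite /mon /coord big_cons mulrC.
by rewrite E addrC addrK.
Qed.

End Single.

Section Two.
Variables (R : realType) (d : nat).
Local Notation V := 'rV[R]_d.
Implicit Types f g a b p q : V -> R.
Local Notation fadd := (@fadd R d).
Local Notation fscal := (@fscal R d).
Local Notation fmul := (@fmul R d).
Local Notation fcst := (@fcst R d).
Local Notation coord := (@coord R d).
Local Notation mon := (@mon R d).

Variables Pi Pi' : nat -> (V -> R) -> (V -> R) -> (V -> R).
Hypothesis Hbid : forall j, bidifferential (Pi j).
Hypothesis H0 : forall a b, smooth a -> smooth b -> Pi 0%N a b = (fun x => a x * b x).
Hypothesis Has : forall A B E : epsseries R d,
  smooth_series A -> smooth_series B -> smooth_series E ->
  star Pi (star Pi A B) E = star Pi A (star Pi B E).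
Hypothesis HP1 : P1 Pi.
Hypothesis Hbid' : forall j, bidifferential (Pi' j).
Hypothesis H0' : forall a b, smooth a -> smooth b -> Pi' 0%N a b = (fun x => a x * b x).
Hypothesis Has' : forall A B E : epsseries R d,
  smooth_series A -> smooth_series B -> smooth_series E ->
  star Pi' (star Pi' A B) E = star Pi' A (star Pi' B E).
Hypothesis HP1' : P1 Pi'.
Hypothesis Hyp : forall (X Y : V) (n : nat),
      star Pi (cst_series (powf X n)) (cst_series (linf Y))
      = star Pi' (cst_series (powf X n)) (cst_series (linf Y)).

Lemma HypN X Y n N : Pi N (powf X n) (linf Y) = Pi' N (powf X n) (linf Y).
Proof.
have sp : smooth (powf X n) by apply: smooth_poly; apply: ispoly_powf.
have sl : smooth (linf Y) by apply: smooth_poly; apply: ispoly_linf.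
have := Hyp X Y n; rewrite (star_cc Hbid sp sl) (star_cc Hbid' sp sl).
by move=> /(congr1 (fun F => F N)).
Qed.

Definition Qb f := smooth f /\ forall j (Y : V), Pi j f (linf Y) = Pi' j f (linf Y).

Lemma base p : ispoly p -> forall j Y, Pi j p (linf Y) = Pi' j p (linf Y).
Proof.
have sl Y : smooth (linf Y) by apply: smooth_poly; apply: ispoly_linf.
have Qadd : forall f g, Qb f -> Qb g -> Qb (fadd f g).
  move=> f g [sf Hf] [sg Hg]; split; first exact: smooth_add.
  by move=> j Y; rewrite (Pi_add_l Hbid) // (Pi_add_l Hbid') // Hf Hg.
have Qscal : forall k f, Qb f -> Qb (fscal k f).
  move=> k f [sf Hf]; split; first exact: smooth_scal.
  by move=> j Y; rewrite (Pi_scal_l Hbid) // (Pi_scal_l Hbid') // Hf.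
have Qpow : forall X n, Qb (powf X n).
  move=> X n; split; first by apply: smooth_poly; apply: ispoly_powf.
  by move=> j Y; apply: HypN.
move=> [K [mons [_ ->]]]; rewrite -/(polyfun mons).
suff : Qb (polyfun mons) by case.
elim: mons => [|m mons IH]; first by rewrite polyfun_nil; apply: (Q0 Qscal Qpow).
rewrite polyfun_cons; apply: (Qadd) => //; apply: (Qscal); exact: (Qmon Qadd Qscal Qpow).
Qed.

Lemma claim K : forall q, poly_deg_lt q K ->
  forall p, ispoly p -> forall j, Pi j p q = Pi' j p q.
Proof.
elim: K => [|K IH] q.
  move=> /pdl0 -> p pp j.
  by rewrite (Pi_zero_r Hbid) ?(Pi_zero_r Hbid') //; apply: smooth_poly.
have Hmon : forall s, (size s <= K)%N -> forall p, ispoly p -> forall j,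
    Pi j p (mon s) = Pi' j p (mon s).
  case=> [|i s] hs p pp j.
    by rewrite mon_nil (Pi_one Hbid H0 Has HP1) // (Pi_one Hbid' H0' Has' HP1').
  have ps : poly_deg_lt (mon s) K.
    by apply: (pdl_mono _ (@pdl_mon R d s)); apply: hs.
  apply/funext => x.
  rewrite (step_formula Hbid H0 Has HP1) // (step_formula Hbid' H0' Has' HP1') //.
  congr (_ - _).
    apply: eq_bigr => k _; rewrite (IH _ ps p pp) -linf_coord base //.
    exact: (Pi_poly Hbid' H0' HP1' _ pp (@ispoly_mon R d s)).
  apply: eq_bigr => k _.
  rewrite -linf_coord (base (@ispoly_mon R d s)) linf_coord (IH _ _ p pp) //.
  have -> : (j - k = (j - k).-1.+1)%N by have := ltn_ord k; lia.
  apply: (@pdl_mono _ _ _ (size s + 1)%N); first by rewrite addn1.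
  apply: (HP1' (n := size s) (m := 1)) => //; [exact: pdl_mon | exact: pdl_coord].
move=> [mons [Hm ->]]; rewrite -/(polyfun mons) => p pp j.
elim: mons Hm => [|m mons IHm] Hm.
  by rewrite polyfun_nil (Pi_zero_r Hbid) ?(Pi_zero_r Hbid') //; apply: smooth_poly.
have sm : smooth (mon m.2) by apply: smooth_poly; apply: ispoly_mon.
have sr : smooth (polyfun mons) by apply: smooth_poly; apply: ispoly_polyfun.
have sp : smooth p by apply: smooth_poly.
rewrite polyfun_cons (Pi_add_r Hbid) ?(Pi_add_r Hbid') //; try exact: smooth_scal.
rewrite (Pi_scal_r Hbid) ?(Pi_scal_r Hbid') // Hmon //; last first.
  by have := Hm m; rewrite inE eqxx => /(_ isT).
by rewrite IHm // => m' hm'; apply: Hm; rewrite inE hm' orbT.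
Qed.

Lemma poly_eq p q j : ispoly p -> ispoly q -> Pi j p q = Pi' j p q.
Proof. by move=> pp [K hq]; apply: (claim hq). Qed.

End Two.

Section Schwarz.
Variables (R : realType) (d : nat).
Local Notation V := 'rV[R]_d.
Implicit Types f g h : V -> R.
Local Notation diffall := (@diffall R d).

Lemma quot_eq h (v y : V) (s : R) :
  (fun t : R => t^-1 *: (((fun s => h (s *: v + y)) \o shift s) (t *: 1)
                          - h (s *: v + y)))
  = (fun t : R => t^-1 *: ((h \o shift (s *: v + y)) (t *: v) - h (s *: v + y))).
Proof.
apply/funext => t /=; congr (_ *: (h _ - _)).
by rewrite scalerDl /GRing.scale /= mulr1 addrA.
Qed.

Lemma dir_derive h (v y : V) (s : R) : diffall h ->
  is_derive s (1 : R) (fun s => h (s *: v + y)) (derive h (s *: v + y) v).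
Proof.
move=> dh; have dv : derivable h (s *: v + y) v by apply: diff_derivable.
apply: DeriveDef.
  by rewrite /derivable quot_eq.
by rewrite /derive quot_eq.
Qed.

Lemma mvt_dir h (v y : V) (b : R) : diffall h -> 0 < b ->
  exists c, [/\ 0 < c, c < b &
    h (b *: v + y) - h y = derive h (c *: v + y) v * b].
Proof.
move=> dh b0.
have := @MVT R (fun s => h (s *: v + y)) (fun s => derive h (s *: v + y) v) 0 b b0.
case.
- by move=> s _; apply: dir_derive.
- apply: derivable_within_continuous => s _.
  by have := dir_derive v y s dh => -[].
move=> c; rewrite in_itv /= => /andP [c0 cb].
by rewrite scale0r add0r subr0 => E; exists c.
Qed.

Lemma mvt_gen (f df : R -> R) (b : R) : 0 < b ->
  (forall s, is_derive s (1 : R) f (df s)) ->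
  exists c, [/\ 0 < c, c < b & f b - f 0 = df c * b].
Proof.
move=> b0 hd.
have dv : {in `[0, b], forall x, derivable f x 1}.
  by move=> s _; have := hd s => -[].
have [c cI E] := @MVT R f df 0 b b0 (fun s _ => hd s) (derivable_within_continuous dv).
move: cI; rewrite in_itv /= => /andP [c0 cb].
by exists c; split => //; rewrite E subr0.
Qed.

Lemma second_diff g (i j : 'I_d) (x0 : V) (b : R) : smooth g -> 0 < b ->
  exists s t, [/\ 0 < s, s < b, 0 < t, t < b &
   g (b *: delta_mx 0 i + (b *: delta_mx 0 j + x0)) - g (b *: delta_mx 0 i + x0)
   - g (b *: delta_mx 0 j + x0) + g x0
   = dpart1 j (dpart1 i g) (t *: delta_mx 0 j + (s *: delta_mx 0 i + x0)) * b * b].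
Proof.
move=> sg b0.
set ei : V := delta_mx 0 i; set ej : V := delta_mx 0 j.
have dg : diffall g by apply: smooth_diffall.
have dgi : diffall (dpart1 i g) by apply: smooth_diffall; apply: smooth_dpart1.
pose phi := fun s => g (s *: ei + (b *: ej + x0)) - g (s *: ei + x0).
have hd : forall s, is_derive s (1 : R) phi
   (dpart1 i g (s *: ei + (b *: ej + x0)) - dpart1 i g (s *: ei + x0)).
  move=> s; have -> : phi = (fun s => g (s *: ei + (b *: ej + x0))) - (fun s => g (s *: ei + x0)) by [].
  by apply: is_deriveB; apply: dir_derive.
have [s [s0 sb E1]] := mvt_gen b0 hd.
have [t [t0 tb E2]] := mvt_dir ej (s *: ei + x0) dgi b0.
exists s, t; split => //.
move: E1; rewrite /phi !scale0r !add0r => E1.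
transitivity ((g (b *: ei + (b *: ej + x0)) - g (b *: ei + x0)) - (g (b *: ej + x0) - g x0));
  first by ring.
rewrite E1 (addrCA (s *: ei)) E2 /dpart1; ring.
Qed.

Lemma cont_eps f (x0 : V) : diffall f -> forall e, 0 < e ->
  exists2 del, 0 < del & forall y, `|x0 - y| < del -> `|f x0 - f y| < e.
Proof.
move=> df e e0.
have c := differentiable_continuous (df x0).
move/cvgrPdist_lt: c => /(_ e e0) /nbhs_normP [del del0 H].
by exists del => // y hy; apply: (H y).
Qed.

Lemma eq_by_eps (A B : R) : (forall e, 0 < e -> `|A - B| < e) -> A = B.
Proof.
move=> H; case: (eqVneq A B) => // ne; have := H `|A - B|.
by rewrite normr_gt0 subr_eq0 ne ltxx => /(_ isT).
Qed.

Lemma tri (a b p q e : R) : `|a - p| < e / 2 -> `|b - q| < e / 2 -> p = q ->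
  `|a - b| < e.
Proof.
move=> h1 h2 epq; have -> : a - b = (a - p) - (b - q) by rewrite epq; ring.
apply: le_lt_trans (ler_normB _ _) _.
by rewrite (splitr e) ltrD.
Qed.

Lemma schwarz g (i j : 'I_d) : smooth g ->
  dpart1 j (dpart1 i g) = dpart1 i (dpart1 j g).
Proof.
move=> sg; apply/funext => x0; apply: eq_by_eps => e e0. have e20 : 0 < e / 2 by rewrite divr_gt0.
have d1 : diffall (dpart1 j (dpart1 i g)).
  by apply: smooth_diffall; apply: (smooth_dpart [:: j; i]).
have d2 : diffall (dpart1 i (dpart1 j g)).
  by apply: smooth_diffall; apply: (smooth_dpart [:: i; j]).
have [del1 del10 H1] := cont_eps x0 d1 e20.
have [del2 del20 H2] := cont_eps x0 d2 e20.
set ei : V := delta_mx 0 i; set ej : V := delta_mx 0 j.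
pose c := `|ei| + `|ej| + 1.
have c0 : 0 < c by rewrite /c ltr_wpDl // addr_ge0.
pose del := Num.min del1 del2.
have del0 : 0 < del by rewrite lt_min del10 del20.
pose b := del / c.
have b0 : 0 < b by rewrite divr_gt0.
have bc : b * c = del by rewrite /b divfK // gt_eqF.
have dl1 : del <= del1 by rewrite /del ge_min lexx.
have dl2 : del <= del2 by rewrite /del ge_min lexx orbT.
have cE : c = `|ei| + `|ej| + 1 by [].
clearbody b c del.
have close : forall (s t : R) (u w : V), 0 < s -> s < b -> 0 < t -> t < b ->
    `|x0 - (t *: w + (s *: u + x0))| <= b * (`|u| + `|w|).
  move=> s t u w s0 sb t0 tb.
  rewrite addrA opprD addrCA subrr addr0 normrN.
  apply: le_trans (ler_normD _ _) _; rewrite !normrZ !gtr0_norm //.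
  rewrite mulrDr addrC; apply: lerD; apply: ler_wpM2r; by rewrite ?normr_ge0 ?ltW.
have [s [t [s0 sb t0 tb E1]]] := second_diff i j x0 sg b0.
have [s' [t' [s0' sb' t0' tb' E2]]] := second_diff j i x0 sg b0.
have E12 : g (b *: ei + (b *: ej + x0)) - g (b *: ei + x0) - g (b *: ej + x0) + g x0
   = g (b *: ej + (b *: ei + x0)) - g (b *: ej + x0) - g (b *: ei + x0) + g x0.
  rewrite (addrCA (b *: ej)); ring.
have E3 := etrans (esym E1) (etrans E12 E2).
have E : dpart1 j (dpart1 i g) (t *: ej + (s *: ei + x0)) =
         dpart1 i (dpart1 j g) (t' *: ei + (s' *: ej + x0)).
  by apply: (mulIf (lt0r_neq0 b0)); apply: (mulIf (lt0r_neq0 b0)); exact: E3.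
have lt1 : `|dpart1 j (dpart1 i g) x0 - dpart1 j (dpart1 i g) (t *: ej + (s *: ei + x0))| < e / 2.
  apply: H1; apply: le_lt_trans (close _ _ _ _ s0 sb t0 tb) _.
  apply: (@lt_le_trans _ _ (b * c)); last by rewrite bc.
  by rewrite cE [X in _ < X]mulrDr mulr1 ltrDl.
have lt2 : `|dpart1 i (dpart1 j g) x0 - dpart1 i (dpart1 j g) (t' *: ei + (s' *: ej + x0))| < e / 2.
  apply: H2; apply: le_lt_trans (close _ _ _ _ s0' sb' t0' tb') _.
  apply: (@lt_le_trans _ _ (b * c)); last by rewrite bc.
  by rewrite cE (addrC `|ej|) [X in _ < X]mulrDr mulr1 ltrDl.
exact: tri lt1 lt2 E.
Qed.

Lemma dpart_swap f (i j : 'I_d) w : smooth f ->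
  dpart (j :: i :: w) f = dpart (i :: j :: w) f.
Proof. by move=> sf; rewrite !dpart_cons schwarz //; apply: smooth_dpart. Qed.

Lemma dpart_move f v1 (i : 'I_d) v2 : smooth f ->
  dpart (v1 ++ i :: v2) f = dpart (i :: v1 ++ v2) f.
Proof.
move=> sf; elim: v1 => [//|a v1 IH].
by rewrite cat_cons dpart_cons IH -dpart_cons dpart_swap.
Qed.

Lemma dpart_perm f (u v : seq 'I_d) : smooth f -> perm_eq u v ->
  dpart u f = dpart v f.
Proof.
move=> sf; elim: u v => [|i u IH] v.
  by move=> /perm_size; case: v.
move=> puv; have iv : i \in v by rewrite -(perm_mem puv) mem_head.
move: puv; case/splitPr: iv => v1 v2 puv.
rewrite dpart_move // !dpart_cons (IH (v1 ++ v2)) //.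
rewrite -(perm_cons i); apply: perm_trans puv _.
by rewrite -cat1s perm_catCA.
Qed.

End Schwarz.

Section Taylor.
Variables (R : realType) (d : nat).
Local Notation V := 'rV[R]_d.
Implicit Types f g a : V -> R.
Local Notation fadd := (@fadd R d).
Local Notation fscal := (@fscal R d).
Local Notation fmul := (@fmul R d).
Local Notation fcst := (@fcst R d).
Local Notation coord := (@coord R d).
Local Notation diffall := (@diffall R d).

Variable x0 : V.

Definition tm (s : seq 'I_d) : V -> R := fun y => \prod_(l <- s) (y 0 l - x0 0 l).
Definition remall (u s : seq 'I_d) := foldr (fun i r => rem i r) s u.
Fixpoint cf (u s : seq 'I_d) : nat :=
  if u is i :: u' then (cf u' s * count_mem i (remall u' s))%N else 1%N.

Lemma tm_cons i s : tm (i :: s) = fmul (fadd (coord i) (fcst (- x0 0 i))) (tm s).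
Proof. by apply/funext => y; rewrite /tm big_cons. Qed.

Lemma ispoly_tm s : ispoly (tm s).
Proof.
elim: s => [|i s IH].
  have -> : tm [::] = fcst 1 by apply/funext => y; rewrite /tm big_nil.
  exact: ispoly_cst.
rewrite tm_cons; apply: ispoly_mul => //; apply: ispoly_add;
  [exact: ispoly_coord | exact: ispoly_cst].
Qed.

Lemma smooth_tm s : smooth (tm s).
Proof. apply: smooth_poly; exact: ispoly_tm. Qed.

Lemma tm_perm s s' : perm_eq s s' -> tm s = tm s'.
Proof. by move=> p; apply/funext => y; rewrite /tm (perm_big _ p). Qed.

Lemma dpart1_tm i s : dpart1 i (tm s) = fscal (count_mem i s)%:R (tm (rem i s)).
Proof.
elim: s => [|a s IH].
  have -> : tm [::] = fcst 1 by apply/funext => y; rewrite /tm big_nil.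
  by rewrite dpart1_cst; apply/funext => y; rewrite /fscal /fcst mul0r.
have dl : diffall (fadd (coord a) (fcst (- x0 0 a))).
  by apply: diffall_add; [apply: diffall_coord | apply: diffall_cst].
rewrite tm_cons dpart1_mul //; last exact: smooth_diffall (smooth_tm s).
rewrite dpart1_add ?dpart1_coord ?dpart1_cst; try exact: diffall_coord;
  try exact: diffall_cst.
rewrite IH /=; apply/funext => y; rewrite /fadd /fmul /fscal /fcst /coord.
case: (eqVneq a i) => [->|ne].
  rewrite addr0 mul1r add1n -nat1r.
  case: (boolP (i \in s)) => [ins|nins].
    rewrite (tm_perm (perm_to_rem ins)) /tm big_cons; ring.
  have -> : count_mem i s = 0%N by apply/count_memPn.
  by rewrite mul0r mulr0 addr0 addr0 mul1r.
rewrite add0n addr0 mul0r add0r /tm big_cons; ring.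
Qed.

Lemma dpart_tm u s : dpart u (tm s) = fscal (cf u s)%:R (tm (remall u s)).
Proof.
elim: u => [|i u IH] /=.
  by apply/funext => y; rewrite /fscal mul1r.
rewrite IH dpart1_scal; last exact: smooth_diffall (smooth_tm _).
by rewrite dpart1_tm; apply/funext => y; rewrite /fscal natrM mulrA.
Qed.

Lemma tm_at s : tm s x0 = if s is [::] then 1 else 0.
Proof.
case: s => [|i s]; first by rewrite /tm big_nil.
by rewrite /tm big_cons subrr mul0r.
Qed.

Lemma cf_perm u s : cf u s != 0%N -> perm_eq s (u ++ remall u s).
Proof.
elim: u => [|i u IH] /=; first by rewrite perm_refl.
rewrite muln_eq0 negb_or => /andP [/IH p1 c1].
have ir : i \in remall u s by rewrite -has_pred1 has_count lt0n.
apply: (perm_trans p1); apply: (@perm_trans _ (u ++ i :: rem i (remall u s))).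
  by rewrite perm_cat2l; apply: perm_to_rem.
by apply/permPl; exact: (perm_catCA u [:: i] (rem i (remall u s))).
Qed.

Lemma cf_nz u s w : perm_eq s (u ++ w) -> cf u s != 0%N /\ perm_eq (remall u s) w.
Proof.
elim: u w => [|i u IH] w /=; first by [].
move=> p; have p' : perm_eq s (u ++ i :: w).
  by apply: (perm_trans p); rewrite perm_sym; apply/permPl; exact: (perm_catCA u [:: i] w).
have [c1 p2] := IH _ p'.
have ir : i \in remall u s by rewrite (perm_mem p2) mem_head.
split.
  rewrite muln_eq0 negb_or c1 /= -lt0n -has_count has_pred1 //.
have := perm_to_rem ir; rewrite perm_sym => p3.
by rewrite -(perm_cons i) (perm_trans p3).
Qed.

Definition leo : rel 'I_d := fun i j => (i <= j)%N.
Lemma leo_total : total leo. Proof. by move=> i j; apply: leq_total. Qed.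
Lemma leo_trans : transitive leo. Proof. by move=> j i k; apply: leq_trans. Qed.
Lemma leo_anti : antisymmetric leo.
Proof. by move=> i j h; apply: val_inj; apply: anti_leq. Qed.

Fixpoint allseqs (N : nat) : seq (seq 'I_d) :=
  if N is N'.+1 then [::] :: [seq i :: s | i <- enum 'I_d, s <- allseqs N']
  else [:: [::]].

Lemma mem_allseqs N s : (size s <= N)%N -> s \in allseqs N.
Proof.
elim: N s => [|N IH] [|i s] //= h; try by rewrite mem_head.
rewrite inE; apply/orP; right.
by apply: (allpairs_f (fun i s => i :: s)); [rewrite mem_enum | apply: IH].
Qed.

Definition TT N := undup [seq sort leo s | s <- allseqs N].

Lemma TT_sorted N s : s \in TT N -> sorted leo s.
Proof.
by rewrite mem_undup => /mapP [s' _ ->]; apply: sort_sorted; apply: leo_total.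
Qed.

Lemma TT_mem N v : sorted leo v -> (size v <= N)%N -> v \in TT N.
Proof.
move=> sv hv; rewrite mem_undup; apply/mapP; exists v; first exact: mem_allseqs.
by rewrite sorted_sort //; apply: leo_trans.
Qed.

Definition lsum (T : seq (seq 'I_d)) (c : seq 'I_d -> R) : V -> R :=
  fun y => \sum_(s <- T) c s * tm s y.

Lemma ispoly_lsum T c : ispoly (lsum T c).
Proof.
elim: T => [|s T IH].
  have -> : lsum [::] c = fcst 0 by apply/funext => y; rewrite /lsum big_nil.
  exact: ispoly_cst.
have -> : lsum (s :: T) c = fadd (fscal (c s) (tm s)) (lsum T c).
  by apply/funext => y; rewrite /lsum big_cons.
by apply: ispoly_add => //; apply: ispoly_scal; apply: ispoly_tm.
Qed.

Lemma dpart_lsum u T c :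
  dpart u (lsum T c) = fun y => \sum_(s <- T) c s * dpart u (tm s) y.
Proof.
elim: T => [|s T IH].
  have -> : lsum [::] c = fcst 0 by apply/funext => y; rewrite /lsum big_nil.
  by rewrite dpart_zero; apply/funext => y; rewrite big_nil.
have -> : lsum (s :: T) c = fadd (fscal (c s) (tm s)) (lsum T c).
  by apply/funext => y; rewrite /lsum big_cons.
rewrite dpart_add; first last.
- by apply: smooth_poly; apply: ispoly_lsum.
- by apply: smooth_scal; apply: smooth_tm.
rewrite dpart_scal ?IH; last exact: smooth_tm.
by apply/funext => y; rewrite /fadd /fscal big_cons.
Qed.

Definition tp a (N : nat) := lsum (TT N) (fun s => dpart s a x0 / (cf s s)%:R).

Lemma remall_self v : cf v v != 0%N /\ remall v v = [::].
Proof.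
have pv : perm_eq v (v ++ [::]) by rewrite cats0 perm_refl.
have [c1 p] := cf_nz pv.
split => //; move/perm_size: p; by case: (remall v v).
Qed.

Lemma taylor_sorted a (N : nat) (v : seq 'I_d) : sorted leo v -> (size v <= N)%N ->
  dpart v (tp a N) x0 = dpart v a x0.
Proof.
move=> sv hv; rewrite /tp dpart_lsum.
rewrite (bigD1_seq v) ?undup_uniq ?TT_mem //=.
rewrite big1_seq ?addr0; last first.
  move=> s /andP [ne sT]; rewrite dpart_tm /fscal.
  case: (eqVneq (cf v s) 0%N) => [->|c1]; first by rewrite mul0r mulr0.
  have p := cf_perm c1; rewrite tm_at.
  case E : (remall v s) => [|k r]; last by rewrite !mulr0.
  move: p; rewrite E cats0 => p.
  have := sorted_eq leo_trans leo_anti (TT_sorted sT) sv p.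
  by move/eqP; rewrite (negbTE ne).
have [c1 E] := remall_self v.
rewrite dpart_tm /fscal E tm_at mulr1 mulfVK //.
by rewrite pnatr_eq0.
Qed.

Lemma taylor a (N : nat) : smooth a -> exists p : V -> R, ispoly p /\
  forall u, (size u <= N)%N -> dpart u p x0 = dpart u a x0.
Proof.
move=> sa; exists (tp a N); split; first exact: ispoly_lsum.
move=> u hu.
have pu : perm_eq u (sort leo u) by rewrite perm_sym perm_sort.
rewrite (dpart_perm _ pu) ?(dpart_perm _ pu) //; last first.
  by apply: smooth_poly; apply: ispoly_lsum.
apply: taylor_sorted; first by apply: sort_sorted; apply: leo_total.
by rewrite size_sort.
Qed.

End Taylor.

Section Final.
Variables (R : realType) (d : nat).
Local Notation V := 'rV[R]_d.
Local Notation trip := (seq 'I_d * seq 'I_d * (V -> R))%type.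

Definition bnd (L : seq trip) : nat :=
  foldr (fun t n => maxn (maxn (size t.1.1) (size t.1.2)) n) 0%N L.

Lemma sum_eq_bnd (L : seq trip) (F G : trip -> R) (N : nat) : (bnd L <= N)%N ->
  (forall t, (size t.1.1 <= N)%N -> (size t.1.2 <= N)%N -> F t = G t) ->
  \sum_(t <- L) F t = \sum_(t <- L) G t.
Proof.
elim: L => [|t L IH] /= hb hFG; first by rewrite !big_nil.
rewrite !big_cons; move: hb; rewrite !geq_max => /andP [/andP [h1 h2] h3].
by rewrite hFG // IH.
Qed.

Lemma bid_eq (P P' : (V -> R) -> (V -> R) -> (V -> R)) :
  bidifferential P -> bidifferential P' ->
  (forall p q, ispoly p -> ispoly q -> P p q = P' p q) ->
  forall a b, smooth a -> smooth b -> P a b = P' a b.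
Proof.
move=> [T [_ HT]] [T' [_ HT']] Hpq a b sa sb; apply/funext => x.
pose N := maxn (bnd T) (bnd T').
have [pa [ppa Ha]] := taylor x N sa.
have [pb [ppb Hb]] := taylor x N sb.
have spa : smooth pa by apply: smooth_poly.
have spb : smooth pb by apply: smooth_poly.
transitivity (P pa pb x).
  rewrite (HT a b) // (HT pa pb) //; apply: (sum_eq_bnd (N := N)).
    exact: leq_maxl.
  by move=> t h1 h2; rewrite Ha // Hb.
rewrite Hpq // (HT' a b) // (HT' pa pb) //; apply: (sum_eq_bnd (N := N)).
  exact: leq_maxr.
by move=> t h1 h2; rewrite Ha // Hb.
Qed.

End Final.

Theorem theorem2p1p3 (R : realType) (d : nat)
    (c : 'I_d -> 'I_d -> 'I_d -> R)
    (Pi Pi' : nat -> ('rV[R]_d -> R) -> ('rV[R]_d -> R) -> ('rV[R]_d -> R)) :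
  is_lie_structure c ->
  is_star_product c Pi -> P1 Pi ->
  is_star_product c Pi' -> P1 Pi' ->
  (forall (X Y : 'rV[R]_d) (n : nat),
      star Pi (cst_series (powf X n)) (cst_series (linf Y))
      = star Pi' (cst_series (powf X n)) (cst_series (linf Y))) ->
  forall a b : epsseries R d, smooth_series a -> smooth_series b ->
    star Pi a b = star Pi' a b.
Proof.
move=> _ [Hbid H0 _ Has] HP1 [Hbid' H0' _ Has'] HP1' Hyp a b sa sb.
apply/funext => n; apply/funext => x; rewrite /star.
apply: eq_bigr => j _; apply: eq_bigr => i _.
rewrite (bid_eq (Hbid j) (Hbid' j)) // => p q pp pq.
exact: (poly_eq Hbid H0 Has HP1 Hbid' H0' Has' HP1' Hyp).
Qed.
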